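(* Let $f\colon Y\to X$ be a morphism of schemes, let $y\in Y$ and $x=f(y)$. If $f$ is submersive at $y$ and $Y$ is regular at $y$, then $X$ is regular at $x$.
   Context: $f$ is submersive at $y$ if the natural map $\kappa(y)\otimes_{\kappa(x)}\mathfrak{m}_x/\mathfrak{m}_x^2\to\mathfrak{m}_y/\mathfrak{m}_y^2$ is injective, where $\mathfrak{m}_x,\mathfrak{m}_y$ are the maximal ideals of $\mathcal{O}_{X,x},\mathcal{O}_{Y,y}$ and $\kappa(\cdot)$ the residue fields. A scheme is regular at a point if its local ring $(R,\mathfrak{m})$ there satisfies: the natural surjection $\operatorname{Sym}_{R/\mathfrak{m}}(\mathfrak{m}/\mathfrak{m}^2)\to\bigoplus_{d\ge0}\mathfrak{m}^d/\mathfrak{m}^{d+1}$ is an isomorphism (no Noetherian hypothesis). *)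

(* Defs.v *)
From HB Require Import structures.
From mathcomp Require Import all_boot all_algebra.
From mathcomp Require Import mpoly.
From Stdlib Require List.

Set Implicit Arguments.
Unset Strict Implicit.
Unset Printing Implicit Defensive.

Import GRing.Theory.
Local Open Scope ring_scope.

(* A local ring is modelled as a (nonzero) commutative ring with units in which
   the non-units are closed under addition; its unique maximal ideal is then
   the set of non-units.  *)
Definition local_ring (R : comUnitRingType) : Prop :=
  forall x y : R, x \isn't a GRing.unit -> y \isn't a GRing.unit ->
    x + y \isn't a GRing.unit.

Definition in_max (R : comUnitRingType) (x : R) : Prop := x \isn't a GRing.unit.

Definition in_maxpow (R : comUnitRingType) (d : nat) (x : R) : Prop :=
  exists s : seq (R * seq R),
    (forall p, List.In p s -> size p.2 = d /\ forall a, List.In a p.2 -> in_max a) /\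
    x = \sum_(p <- s) p.1 * \prod_(a <- p.2) a.

Definition local_hom (A B : comUnitRingType) (phi : {rmorphism A -> B}) : Prop :=
  forall a : A, in_max a -> in_max (phi a).

(* Generators of the ideal I_u of A[X_0..X_(n-1)] presenting
   Sym_{A/m}(W_u), where W_u is the subspace of m/m^2 spanned by the classes of
   u_0, ..., u_(n-1) (all u_i in m):
   - constants c with c in m (reduction of coefficients to kappa = A/m),
   - linear forms sum_i a_i X_i with sum_i a_i u_i in m^2 (the linear relations
     among the classes [u_i] in m/m^2). *)
Definition sym_rel (A : comUnitRingType) (n : nat) (u : 'I_n -> A)
    (r : {mpoly A[n]}) : Prop :=
  (exists c : A, in_max c /\ r = c%:MP) \/
  (exists a : 'I_n -> A, in_maxpow 2 (\sum_i a i * u i) /\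
                         r = \sum_i a i *: 'X_i).

(* P lies in the ideal generated by the relations above, i.e. its class in
   Sym_{A/m}(m/m^2) (via X_i |-> [u_i]) is zero. *)
Definition sym_zero (A : comUnitRingType) (n : nat) (u : 'I_n -> A)
    (P : {mpoly A[n]}) : Prop :=
  exists s : seq ({mpoly A[n]} * {mpoly A[n]}),
    (forall p, List.In p s -> sym_rel u p.2) /\
    P = \sum_(p <- s) p.1 * p.2.

(* Regularity of a local ring (A, m) without Noetherian hypothesis:
   the natural surjection Sym_{A/m}(m/m^2) -> (+)_d m^d/m^(d+1) is an
   isomorphism, i.e. (being a surjective graded map) it is injective in every
   degree d: a homogeneous degree-d polynomial expression P in elements
   u_0..u_(n-1) of m whose value P(u) lies in m^(d+1) is zero in Sym. *)
Definition regular_local (A : comUnitRingType) : Prop :=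
  forall (d n : nat) (u : 'I_n -> A), (forall i, in_max (u i)) ->
  forall P : {mpoly A[n]}, P \is d.-homog ->
    in_maxpow d.+1 P.@[u] -> sym_zero u P.

(* Submersivity of a local homomorphism phi : (A, m_A) -> (B, m_B):
   kappa_B (x)_{kappa_A} m_A/m_A^2 -> m_B/m_B^2 is injective.  An element of the
   source is sum_i [b_i] (x) [a_i] with a_i in m_A; it maps to the class of
   sum_i b_i phi(a_i).  It is zero in the tensor product iff the vector
   ([b_i])_i in kappa_B^n lies in the kappa_B-span of the relation vectors
   ([phi c_i])_i, where sum_i c_i a_i in m_A^2 (since
   kappa_B (x) (kappa_A^n / R) = kappa_B^n / kappa_B R). *)
Definition submersive (A B : comUnitRingType) (phi : {rmorphism A -> B}) : Prop :=
  forall (n : nat) (a : 'I_n -> A) (b : 'I_n -> B),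
    (forall i, in_max (a i)) ->
    in_maxpow 2 (\sum_i b i * phi (a i)) ->
    exists s : seq (B * ('I_n -> A)),
      (forall p, List.In p s -> in_maxpow 2 (\sum_i p.2 i * a i)) /\
      (forall i, in_max (b i - \sum_(p <- s) p.1 * phi (p.2 i))).

(* Main.v *)
Require Import Defs.
From HB Require Import structures.
From mathcomp Require Import all_boot all_algebra.
From mathcomp Require Import mpoly ring.
From Stdlib Require Import Classical FunctionalExtensionality.
From Stdlib Require List.

Set Implicit Arguments.
Unset Strict Implicit.
Unset Printing Implicit Defensive.

Import GRing.Theory.
Local Open Scope ring_scope.

Lemma mpoly_ind' (n : nat) (R : comNzRingType) (Q : {mpoly R[n]} -> Prop) :
  (forall c, Q c%:MP) -> (forall i, Q 'X_i) ->
  (forall p q, Q p -> Q q -> Q (p + q)) ->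
  (forall p q, Q p -> Q q -> Q (p * q)) -> forall p, Q p.
Proof.
move=> QC QX QD QM p; rewrite [p]mpolyE.
have Q0 : Q 0 by rewrite -mpolyC0.
have Q1 : Q 1 by rewrite -mpolyC1.
apply: (big_ind Q) => // m _; rewrite -mul_mpolyC; apply: (QM) => //.
rewrite mpolyXE_id; apply: (big_ind Q) => // i _.
move: (m i) => k; elim: k => [|k IH]; first by rewrite expr0.
by rewrite exprS; apply: (QM).
Qed.

Lemma In_mapP (T U : Type) (f : T -> U) (s : seq T) y :
  List.In y (map f s) -> exists x, List.In x s /\ y = f x.
Proof.
elim: s => //= x s IH [<-|/IH [z [Hz ->]]]; first by exists x; split; [left|].
by exists z; split; [right|].
Qed.

Lemma In_cat (T : Type) (s1 s2 : seq T) x :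
  List.In x (s1 ++ s2) <-> List.In x s1 \/ List.In x s2.
Proof. exact: List.in_app_iff. Qed.

Lemma sum_nonunit (R : comUnitRingType) (I : Type) (s : seq I) (F : I -> R) :
  local_ring R -> (forall x, List.In x s -> in_max (F x)) ->
  in_max (\sum_(x <- s) F x).
Proof.
move=> loc; elim: s => [|x s IH] H; first by rewrite big_nil /in_max unitr0.
rewrite big_cons; apply: loc; first by apply: H; left.
by apply: IH => y Hy; apply: H; right.
Qed.

Lemma mul_nonunit (R : comUnitRingType) (x c : R) : in_max c -> in_max (x * c).
Proof. by rewrite /in_max unitrM => /negbTE ->; rewrite andbF. Qed.

Definition cideal (R : comUnitRingType) (n : nat) (M : {mpoly R[n]}) : Prop :=
  exists s : seq ({mpoly R[n]} * R),
    (forall p, List.In p s -> in_max p.2) /\ M = \sum_(p <- s) p.1 * p.2%:MP.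

Section CIdeal.
Variables (R : comUnitRingType) (n : nat).
Implicit Types (M N : {mpoly R[n]}).

Lemma cideal0 : cideal (0 : {mpoly R[n]}).
Proof. by exists [::]; split => //; rewrite big_nil. Qed.

Lemma cidealD M N : cideal M -> cideal N -> cideal (M + N).
Proof.
move=> [s [Hs eM]] [t [Ht eN]]; rewrite eM eN; exists (s ++ t); split; last by rewrite big_cat.
by move=> p Hp; case: (List.in_app_or _ _ _ Hp) => [/Hs|/Ht].
Qed.

Lemma cidealM q M : cideal M -> cideal (q * M).
Proof.
move=> [s [Hs ->]]; exists [seq (q * p.1, p.2) | p <- s]; split.
  move=> p Hp; have [x [Hx Ex]] := In_mapP Hp; rewrite Ex /=; exact: Hs.
by rewrite big_map mulr_sumr; apply: eq_bigr => p _; rewrite mulrA.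
Qed.

Lemma cidealC c : in_max c -> cideal (c%:MP : {mpoly R[n]}).
Proof.
by move=> Hc; exists [:: (1, c)]; split => [p [<-|]|] //; rewrite big_seq1 mul1r.
Qed.

Lemma cideal_sum (I : Type) (s : seq I) (F : I -> {mpoly R[n]}) :
  (forall x, List.In x s -> cideal (F x)) -> cideal (\sum_(x <- s) F x).
Proof.
elim: s => [|x s IH] H; first by rewrite big_nil; apply: cideal0.
rewrite big_cons; apply: cidealD; first by apply: H; left.
by apply: IH => y Hy; apply: H; right.
Qed.

Lemma cideal_coef M : local_ring R -> cideal M -> forall m, in_max M@_m.
Proof.
move=> loc [s [Hs ->]] m; rewrite raddf_sum /=; apply: sum_nonunit => // p Hp.
by rewrite mulrC mcoeffCM mulrC; apply: mul_nonunit; apply: Hs.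
Qed.

Lemma coef_cideal M : (forall m, in_max M@_m) -> cideal M.
Proof.
move=> H; rewrite [M]mpolyE; apply: cideal_sum => m _.
by rewrite -mul_mpolyC mulrC; apply: cidealM; apply: cidealC.
Qed.

End CIdeal.

Section SymZero.
Variables (R : comUnitRingType) (n : nat) (u : 'I_n -> R).
Implicit Types (P Q : {mpoly R[n]}).

Lemma sz0 : sym_zero u 0.
Proof. by exists [::]; split => //; rewrite big_nil. Qed.

Lemma szD P Q : sym_zero u P -> sym_zero u Q -> sym_zero u (P + Q).
Proof.
move=> [s [Hs eP]] [t [Ht eQ]]; rewrite eP eQ; exists (s ++ t); split; last by rewrite big_cat.
by move=> p Hp; case: (List.in_app_or _ _ _ Hp) => [/Hs|/Ht].
Qed.

Lemma szM q P : sym_zero u P -> sym_zero u (q * P).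
Proof.
move=> [s [Hs ->]]; exists [seq (q * p.1, p.2) | p <- s]; split.
  move=> p Hp; have [x [Hx Ex]] := In_mapP Hp; rewrite Ex /=; exact: Hs.
by rewrite big_map mulr_sumr; apply: eq_bigr => p _; rewrite mulrA.
Qed.

Lemma szrel r : sym_rel u r -> sym_zero u r.
Proof.
by move=> Hr; exists [:: (1, r)]; split => [p [<-|]|] //; rewrite big_seq1 mul1r.
Qed.

Lemma sz_cideal P : cideal P -> sym_zero u P.
Proof.
move=> [s [Hs ->]]; elim: s Hs => [|p s IH] Hs; first by rewrite big_nil; exact: sz0.
rewrite big_cons; apply: szD.
  by apply: szM; apply: szrel; left; exists p.2; split => //; apply: Hs; left.
by apply: IH => q Hq; apply: Hs; right.
Qed.

Definition lin (a : 'I_n -> R) : {mpoly R[n]} := \sum_i a i *: 'X_i.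

Lemma cideal_lin a : (forall i, in_max (a i)) -> cideal (lin a).
Proof.
move=> H; rewrite /lin; apply: cideal_sum => i _.
by rewrite -mul_mpolyC mulrC; apply: cidealM; apply: cidealC.
Qed.

Lemma sz_lin a : in_maxpow 2 (\sum_i a i * u i) -> sym_zero u (lin a).
Proof. by move=> H; apply: szrel; right; exists a. Qed.

End SymZero.

Section Subst.
Variables (R : comUnitRingType) (n : nat).

Definition tup (i : 'I_n) (L : {mpoly R[n]}) : n.-tuple {mpoly R[n]} :=
  [tuple (if j == i then 'X_j - L else 'X_j) | j < n].

Lemma sigX i L j : 'X_j \mPo tup i L = if j == i then 'X_j - L else 'X_j.
Proof. by rewrite comp_mpolyXU -tnth_nth tnth_mktuple. Qed.

Lemma sig_diff i L F : exists r, F - (F \mPo tup i L) = r * L.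
Proof.
elim/mpoly_ind': F.
- by move=> c; exists 0; rewrite comp_mpolyC subrr mul0r.
- move=> j; rewrite sigX; case: eqP => _; first by exists 1; rewrite mul1r; ring.
  by exists 0; rewrite subrr mul0r.
- move=> p q [r1 e1] [r2 e2]; exists (r1 + r2).
  by rewrite rmorphD /= mulrDl -e1 -e2; ring.
- move=> p q [r1 e1] [r2 e2]; exists (r1 * q + p * r2 - r1 * r2 * L).
  have e1' : p \mPo tup i L = p - r1 * L by rewrite -e1; ring.
  have e2' : q \mPo tup i L = q - r2 * L by rewrite -e2; ring.
  by rewrite rmorphM /= e1' e2'; ring.
Qed.

Lemma lin_sub (v w : 'I_n -> R) k :
  lin (fun j => v j - k * w j) = lin v - k *: lin w.
Proof.
rewrite /lin scaler_sumr -sumrB; apply: eq_bigr => j _.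
by rewrite scalerBl scalerA.
Qed.

Lemma sig_lin i L (v : 'I_n -> R) : lin v \mPo tup i L = lin v - v i *: L.
Proof.
rewrite /lin raddf_sum /=.
have -> : \sum_j ((v j *: 'X_j) \mPo tup i L) =
          \sum_j (v j *: 'X_j - (if j == i then v i *: L else 0)).
  apply: eq_bigr => j _; rewrite comp_mpolyZ sigX.
  by case: eqP => [->|_]; rewrite ?subr0 // scalerBr.
by rewrite sumrB -big_mkcond /= big_pred1_eq.
Qed.

Lemma sig_cideal i L M : cideal M -> cideal (M \mPo tup i L).
Proof.
move=> [s [Hs ->]]; rewrite raddf_sum /=.
elim: s Hs => [|p s IH] Hs; first by rewrite big_nil; apply: cideal0.
rewrite big_cons; apply: cidealD.
  by rewrite rmorphM /= comp_mpolyC; apply: cidealM; apply: cidealC; apply: Hs; left.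
by apply: IH => q Hq; apply: Hs; right.
Qed.

End Subst.

Section Descent.
Variables (A B : comUnitRingType) (phi : {rmorphism A -> B}).
Hypotheses (locA : local_ring A) (locB : local_ring B) (lh : local_hom phi).
Variables (n : nat) (u : 'I_n -> A).

Lemma map_lin (a : 'I_n -> A) :
  map_mpoly phi (lin a) = lin (fun i => phi (a i)).
Proof.
rewrite /lin raddf_sum /=; apply: eq_bigr => i _.
by rewrite map_mpolyZ map_mpolyX.
Qed.

Lemma map_sig (i : 'I_n) (L F : {mpoly A[n]}) :
  map_mpoly phi (F \mPo tup i L) = map_mpoly phi F \mPo tup i (map_mpoly phi L).
Proof.
elim/mpoly_ind': F.
- by move=> c; rewrite comp_mpolyC map_mpolyC comp_mpolyC.
- move=> j; rewrite map_mpolyX sigX sigX.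
  by case: eqP => _; rewrite ?rmorphB /= map_mpolyX.
- by move=> p q e1 e2; rewrite !rmorphD /= e1 e2.
- by move=> p q e1 e2; rewrite !rmorphM /= e1 e2.
Qed.

Lemma descent_base (s : seq ({mpoly B[n]} * ('I_n -> A))) P M :
  (forall p, List.In p s -> forall i, in_max (p.2 i)) -> cideal M ->
  map_mpoly phi P = \sum_(p <- s) p.1 * map_mpoly phi (lin p.2) + M ->
  sym_zero u P.
Proof.
move=> Hs HM eP; apply: sz_cideal; apply: coef_cideal => m.
have: cideal (map_mpoly phi P).
  rewrite eP; apply: cidealD => //; apply: cideal_sum => p Hp; apply: cidealM.
  by rewrite map_lin; apply: cideal_lin => i; apply: lh; exact: Hs.
move=> /(cideal_coef locB) /(_ m); rewrite mcoeff_map_mpoly.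
by apply: contra; apply: rmorph_unit.
Qed.

Lemma descent k : forall (s : seq ({mpoly B[n]} * ('I_n -> A))) P M,
  size s = k ->
  (forall p, List.In p s -> sym_zero u (lin p.2)) -> cideal M ->
  map_mpoly phi P = \sum_(p <- s) p.1 * map_mpoly phi (lin p.2) + M ->
  sym_zero u P.
Proof.
elim: k => [|k IH] s P M Hk Hs HM eP.
  by case: s Hk Hs eP => // _ _ eP; apply: (descent_base (s := [::])) eP.
case: (classic (exists p, List.In p s /\ exists i, p.2 i \is a GRing.unit))
  => [[p0 [Hp0 [i Hi]]]|Hno]; last first.
  apply: (descent_base _ HM eP) => p Hp j; apply/negP => Hu; apply: Hno.
  by exists p; split => //; exists j.
have [l1 [l2 Es]] := List.in_split _ _ Hp0.
pose a := p0.2; pose c := a i.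
pose L := c^-1 *: lin a.
pose t := tup i L; pose tB := tup i (map_mpoly phi L).
have HL : sym_zero u L by rewrite /L -mul_mpolyC; apply: szM; apply: Hs.
have [r er] := sig_diff i L P.
have -> : P = (P \mPo t) + r * L by rewrite -er; ring.
apply: szD; last by apply: szM.
pose v' (w : 'I_n -> A) := fun j => w j - w i * c^-1 * a j.
have linv' w : lin (v' w) = lin w \mPo t.
  by rewrite sig_lin /v' lin_sub /L scalerA.
apply: (IH [seq (p.1 \mPo tB, v' p.2) | p <- l1 ++ l2] _ (M \mPo tB)).
- move: Hk; rewrite Es size_map !size_cat /= addnS; by case.
- move=> p Hp; have [x [Hx ->]] := In_mapP Hp; rewrite /= linv' sig_lin.
  apply: szD.
    by apply: Hs; rewrite Es; apply: List.in_or_app; case: (List.in_app_or _ _ _ Hx); [left|right; right].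
  by rewrite -scaleNr -mul_mpolyC; apply: szM.
- exact: sig_cideal.
rewrite /t map_sig eP Es rmorphD /= raddf_sum /= big_map !big_cat big_cons /=.
have hterm (p : {mpoly B[n]} * ('I_n -> A)) :
  (p.1 * map_mpoly phi (lin p.2)) \mPo tup i (map_mpoly phi L) =
  (p.1 \mPo tup i (map_mpoly phi L)) * map_mpoly phi (lin (v' p.2)).
  by rewrite rmorphM /= linv' /t map_sig.
have h0 : (p0.1 * map_mpoly phi (lin p0.2)) \mPo tup i (map_mpoly phi L) = 0.
  rewrite rmorphM /= -map_sig sig_lin /L scalerA mulrV // scale1r subrr.
  by rewrite rmorph0 mulr0.
rewrite h0 add0r.
by congr (_ + _ + _); apply: eq_bigr => p _; rewrite hterm.
Qed.


End Descent.

Section Main.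
Variables (A B : comUnitRingType) (phi : {rmorphism A -> B}).
Hypotheses (locA : local_ring A) (locB : local_ring B) (lh : local_hom phi).

Lemma maxpow_map k x : in_maxpow k x -> in_maxpow k (phi x).
Proof.
move=> [s [Hs ->]]; exists [seq (phi p.1, [seq phi a | a <- p.2]) | p <- s]; split.
  move=> p Hp; have [y [Hy ->]] := In_mapP Hp; have [H1 H2] := Hs y Hy.
  split; first by rewrite /= size_map.
  by move=> a Ha; have [z [Hz ->]] := In_mapP Ha; apply: lh; apply: H2.
rewrite rmorph_sum big_map; apply: eq_bigr => p _.
by rewrite rmorphM rmorph_prod big_map.
Qed.

Variables (n : nat) (u : 'I_n -> A).

Lemma meval_map P :
  (map_mpoly phi P).@[fun i => phi (u i)] = phi (P.@[u]).
Proof.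
elim/mpoly_ind': P.
- by move=> c; rewrite map_mpolyC !mevalC.
- by move=> i; rewrite map_mpolyX !mevalXU.
- by move=> p q e1 e2; rewrite !rmorphD /= e1 e2.
- by move=> p q e1 e2; rewrite !rmorphM /= e1 e2.
Qed.

Lemma homog_map d (P : {mpoly A[n]}) : P \is d.-homog -> map_mpoly phi P \is d.-homog.
Proof.
move=> hP; apply/dhomogP => m; rewrite mcoeff_msupp mcoeff_map_mpoly => nz.
apply: (dhomogP _ _ _ hP); rewrite mcoeff_msupp; apply: contra nz => /eqP E.
by rewrite E raddf0.
Qed.

Definition Good (X : {mpoly B[n]}) := exists (s : seq ({mpoly B[n]} * ('I_n -> A))) M,
  (forall p, List.In p s -> in_maxpow 2 (\sum_i p.2 i * u i)) /\ cideal M /\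
  X = \sum_(p <- s) p.1 * map_mpoly phi (lin p.2) + M.

Lemma Good0 : Good 0.
Proof.
exists [::], 0; split => //; split; first exact: cideal0.
by rewrite big_nil addr0.
Qed.

Lemma GoodD X Y : Good X -> Good Y -> Good (X + Y).
Proof.
move=> [s [M [Hs [HM ->]]]] [t [N [Ht [HN ->]]]]; exists (s ++ t), (M + N); split.
  by move=> p Hp; case: (List.in_app_or _ _ _ Hp) => [/Hs|/Ht].
split; first exact: cidealD.
by rewrite big_cat /=; ring.
Qed.

Lemma GoodM q X : Good X -> Good (q * X).
Proof.
move=> [s [M [Hs [HM ->]]]]; exists [seq (q * p.1, p.2) | p <- s], (q * M); split.
  move=> p Hp; have [x [Hx Ex]] := In_mapP Hp; rewrite Ex /=; exact: Hs.
split; first exact: cidealM.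
rewrite big_map mulrDr mulr_sumr; congr (_ + _).
by apply: eq_bigr => p _; rewrite mulrA.
Qed.

Lemma lin_sumB (I : Type) (s : seq I) (F : I -> 'I_n -> B) :
  \sum_(p <- s) lin (F p) = lin (fun i => \sum_(p <- s) F p i).
Proof.
rewrite /lin exchange_big /=; apply: eq_bigr => i _.
by rewrite scaler_suml.
Qed.

Lemma lin_addB (v w : 'I_n -> B) : lin v + lin w = lin (fun i => v i + w i).
Proof. by rewrite /lin -big_split /=; apply: eq_bigr => i _; rewrite scalerDl. Qed.

Lemma lin_CB c (w : 'I_n -> B) : c%:MP * lin w = lin (fun i => c * w i).
Proof.
by rewrite mul_mpolyC /lin scaler_sumr; apply: eq_bigr => i _; rewrite scalerA.
Qed.

Lemma Good_rel r : submersive phi -> (forall i, in_max (u i)) ->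
  sym_rel (fun i => phi (u i)) r -> Good r.
Proof.
move=> sub um [[c [Hc ->]]|[b [Hb ->]]].
  exists [::], c%:MP; split => //; split; first exact: cidealC.
  by rewrite big_nil add0r.
have [s0 [Hs0 He]] := sub n u b um Hb.
pose e i := b i - \sum_(p <- s0) p.1 * phi (p.2 i).
exists [seq (p.1%:MP, p.2) | p <- s0], (lin e); split.
  by move=> p Hp; have [x [Hx ->]] := In_mapP Hp; apply: Hs0.
split; first exact: cideal_lin.
rewrite big_map /=.
change (lin b = \sum_(j <- s0) j.1%:MP * map_mpoly phi (lin j.2) + lin e); under eq_bigr do rewrite map_lin lin_CB.
rewrite lin_sumB lin_addB; congr lin; apply: FunctionalExtensionality.functional_extensionality => i.
by rewrite /e addrC subrK.
Qed.

End Main.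

Lemma Good_sz (A B : comUnitRingType) (phi : {rmorphism A -> B}) (n : nat)
  (u : 'I_n -> A) X :
  submersive phi -> (forall i, in_max (u i)) ->
  sym_zero (fun i => phi (u i)) X -> Good phi u X.
Proof.
move=> sub um [s [Hs ->]]; elim: s Hs => [|p s IH] Hs.
  by rewrite big_nil; apply: Good0.
rewrite big_cons; apply: GoodD.
  by apply: GoodM; apply: Good_rel => //; apply: Hs; left.
by apply: IH => q Hq; apply: Hs; right.
Qed.

(* Local form of the statement: A = O_{X,x}, B = O_{Y,y}, phi = f^#_y. *)
Theorem lemma3p13 (A B : comUnitRingType) (phi : {rmorphism A -> B}) :
  local_ring A -> local_ring B -> local_hom phi ->
  submersive phi -> regular_local B -> regular_local A.
Proof.
move=> locA locB lh sub regB d n u um P hP Pm.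
have um' : forall i, in_max (phi (u i)) by move=> i; apply: lh.
have HB := regB d n (fun i => phi (u i)) um' (map_mpoly phi P)
  (homog_map phi hP) ltac:(rewrite meval_map; exact: maxpow_map).
have [s [M [Hs [HM eP]]]] := Good_sz sub um HB.
apply: (descent locB lh (k := size s) (s := s) (M := M)) => //.
by move=> p Hp; apply: sz_lin; apply: Hs.
Qed.
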